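(* Let $n\ge2$, and set $A=\bigl(\sum_{j=0}^{\lceil n/2\rceil-1}2\cdot4^j\bigr)\bmod 2^n$ (the $n$-bit integer whose bits at odd positions are $1$ and at even positions are $0$) and $B=\bigl(\sum_{j=0}^{\lceil n/2\rceil-1}4^j\bigr)\bmod 2^n$ (bits at even positions $1$, at odd positions $0$). For $x\in\{0,\dots,2^n-1\}$ let $y^{(1)}(x)=(0\dotplus x)\oplus(A\dotplus x)$ and $y^{(2)}(x)=(A\dotplus x)\oplus(B\dotplus x)$. Then the pair $(y^{(1)}(x),y^{(2)}(x))$ determines $x$ modulo $2^{n-1}$: for all $x,x'\in\{0,\dots,2^n-1\}$, if $y^{(1)}(x)=y^{(1)}(x')$ and $y^{(2)}(x)=y^{(2)}(x')$ then $x\equiv x'\pmod{2^{n-1}}$.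
   Context: $a\dotplus b=(a+b)\bmod 2^n$; $\oplus$ is bitwise XOR of $n$-bit integers. These are the queries $(\alpha,\beta)=(0,A)$ and $(\alpha,\beta)=(A,B)$ for the equation $y=(\alpha\dotplus x)\oplus(\beta\dotplus x)$. *)

(* Defs.v *)
From Stdlib Require Import Arith List.

Definition addm (n a b : nat) : nat := (a + b) mod 2 ^ n.

Fixpoint sum_upto (k : nat) (f : nat -> nat) : nat :=
  match k with
  | O => 0
  | S k' => sum_upto k' f + f k'
  end.

Definition ceil_half (n : nat) : nat := (n + 1) / 2.

Definition constA (n : nat) : nat :=
  (sum_upto (ceil_half n) (fun j => 2 * 4 ^ j)) mod 2 ^ n.

Definition constB (n : nat) : nat :=
  (sum_upto (ceil_half n) (fun j => 4 ^ j)) mod 2 ^ n.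

Definition yq (n alpha beta x : nat) : nat :=
  Nat.lxor (addm n alpha x) (addm n beta x).

Definition y1 (n x : nat) : nat := yq n 0 (constA n) x.
Definition y2 (n x : nat) : nat := yq n (constA n) (constB n) x.

(* Main.v *)
Require Import Defs.
From Stdlib Require Import Arith.
From Stdlib Require Import Lia Bool.

Lemma mod2_3 x y z : (x + y + z) mod 2 = (x mod 2 + y mod 2 + z) mod 2.
Proof.
  rewrite (Nat.div_mod_eq x 2) at 1. rewrite (Nat.div_mod_eq y 2) at 1.
  replace (2 * (x / 2) + x mod 2 + (2 * (y / 2) + y mod 2) + z)
    with (x mod 2 + y mod 2 + z + (x/2 + y/2) * 2) by lia.
  apply Nat.Div0.mod_add.
Qed.

Lemma b2n_xor t u v w :
  Nat.b2n t = (Nat.b2n u + Nat.b2n v + Nat.b2n w) mod 2 -> t = xorb (xorb u v) w.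
Proof. destruct t, u, v, w; vm_compute; intro H; congruence. Qed.

Lemma bit_add a b i :
  Nat.testbit (a + b) i =
  xorb (xorb (Nat.testbit a i) (Nat.testbit b i)) (2 ^ i <=? a mod 2 ^ i + b mod 2 ^ i).
Proof.
  apply b2n_xor. rewrite !Nat.testbit_spec'.
  assert (HP : 2 ^ i <> 0) by (apply Nat.pow_nonzero; lia).
  set (P := 2 ^ i) in *.
  assert (Ha := Nat.div_mod_eq a P). assert (Hb := Nat.div_mod_eq b P).
  assert (ra := Nat.mod_upper_bound a P HP). assert (rb := Nat.mod_upper_bound b P HP).
  replace (a + b) with ((a / P + b / P) * P + (a mod P + b mod P)) by lia.
  rewrite Nat.div_add_l by exact HP.
  replace ((a mod P + b mod P) / P) with (Nat.b2n (P <=? a mod P + b mod P)).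
  - apply mod2_3.
  - destruct (Nat.leb_spec P (a mod P + b mod P)); simpl.
    + replace (a mod P + b mod P) with (1 * P + (a mod P + b mod P - P)) by lia.
      rewrite Nat.div_add_l by exact HP. rewrite Nat.div_small by lia. lia.
    + rewrite Nat.div_small by lia. reflexivity.
Qed.

Lemma bit_addm n a b i : i < n ->
  Nat.testbit (addm n a b) i =
  xorb (xorb (Nat.testbit a i) (Nat.testbit b i)) (2 ^ i <=? a mod 2 ^ i + b mod 2 ^ i).
Proof. intro H. unfold addm. rewrite Nat.mod_pow2_bits_low by exact H. apply bit_add. Qed.

Lemma mod_mod_pow s m n : m <= n -> (s mod 2 ^ n) mod 2 ^ m = s mod 2 ^ m.
Proof.
  intro H. replace (2 ^ n) with (2 ^ m * 2 ^ (n - m)).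
  - rewrite Nat.Div0.mod_mul_r. rewrite Nat.mul_comm. rewrite Nat.Div0.mod_add.
    apply Nat.Div0.mod_mod.
  - rewrite <- Nat.pow_add_r. f_equal. lia.
Qed.

Lemma sum_shift c k t :
  sum_upto (k + t) (fun j => c * 4 ^ j) =
  sum_upto k (fun j => c * 4 ^ j) + 4 ^ k * sum_upto t (fun j => c * 4 ^ j).
Proof.
  induction t as [|t IH]; simpl.
  - rewrite Nat.add_0_r. lia.
  - replace (k + S t) with (S (k + t)) by lia. simpl. rewrite IH.
    rewrite Nat.pow_add_r. lia.
Qed.

Lemma sumA_closed k : 3 * sum_upto k (fun j => 2 * 4 ^ j) + 2 = 2 * 4 ^ k.
Proof. induction k; simpl in *; lia. Qed.

Lemma sumB_closed k : 3 * sum_upto k (fun j => 4 ^ j) + 1 = 4 ^ k.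
Proof. induction k; simpl in *; lia. Qed.

Lemma sum_ext k f g : (forall j, f j = g j) -> sum_upto k f = sum_upto k g.
Proof. intro H. induction k as [|k IH]; cbn [sum_upto]; [reflexivity| rewrite IH, H; reflexivity]. Qed.

Lemma sum_scale k c f : sum_upto k (fun j => c * f j) = c * sum_upto k f.
Proof. induction k as [|k IH]; cbn [sum_upto]; [lia| rewrite IH; lia]. Qed.

Lemma sumB_eq k : sum_upto k (fun j => 4 ^ j) = sum_upto k (fun j => 1 * 4 ^ j).
Proof. apply sum_ext. intro j. symmetry. apply Nat.mul_1_l. Qed.

Lemma pow2_even k : 2 ^ (2 * k) = 4 ^ k.
Proof. rewrite Nat.pow_mul_r. reflexivity. Qed.

Lemma mod_small_add r q M : r < M -> (r + M * q) mod M = r.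
Proof. intro H. rewrite Nat.mul_comm, Nat.Div0.mod_add. apply Nat.mod_small, H. Qed.

Lemma key n m : m <= n ->
  (3 * (constA n mod 2 ^ m) + 2 = 2 * 2 ^ m /\ 3 * (constB n mod 2 ^ m) + 1 = 2 ^ m) \/
  (3 * (constA n mod 2 ^ m) + 2 = 2 ^ m /\ 3 * (constB n mod 2 ^ m) + 1 = 2 * 2 ^ m).
Proof.
  intro Hm. unfold constA, constB. rewrite !mod_mod_pow by exact Hm.
  rewrite sumB_eq. unfold ceil_half.
  destruct (Nat.Even_or_Odd m) as [[k Hk] | [k Hk]]; subst m.
  - left. assert (k <= (n + 1) / 2) by (apply Nat.div_le_lower_bound; lia).
    replace ((n + 1) / 2) with (k + ((n+1)/2 - k)) by lia.
    rewrite !sum_shift, pow2_even.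
    assert (HA := sumA_closed k). assert (HB := sumB_closed k).
    rewrite <- sumB_eq in *.
    rewrite !mod_small_add by lia. lia.
  - right. assert (k + 1 <= (n + 1) / 2) by (apply Nat.div_le_lower_bound; lia).
    replace ((n + 1) / 2) with (k + ((n+1)/2 - k)) by lia.
    rewrite sum_shift.
    replace ((n + 1) / 2 - k) with (S ((n+1)/2 - k - 1)) by lia.
    assert (E2 : 2 ^ (2 * k + 1) = 2 * 4 ^ k)
      by (rewrite Nat.pow_add_r, pow2_even; simpl; lia).
    split.
    + replace (sum_upto (S ((n + 1) / 2 - k - 1)) (fun j => 2 * 4 ^ j))
        with (2 * sum_upto (S ((n + 1) / 2 - k - 1)) (fun j => 4 ^ j)).
      2:{ symmetry. apply sum_scale. }
      rewrite E2. assert (HA := sumA_closed k).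
      replace (4 ^ k * (2 * sum_upto (S ((n + 1) / 2 - k - 1)) (fun j => 4 ^ j)))
        with (2 * 4 ^ k * sum_upto (S ((n + 1) / 2 - k - 1)) (fun j => 4 ^ j)) by lia.
      rewrite mod_small_add by lia. lia.
    + rewrite (sum_shift 1 k (S _)). rewrite <- sumB_eq.
      replace (S ((n + 1) / 2 - k - 1)) with (1 + ((n + 1) / 2 - k - 1)) by lia.
      rewrite (sum_shift 1 1 _). change (sum_upto 1 (fun j => 1 * 4 ^ j)) with 1.
      rewrite E2. assert (HB := sumB_closed k).
      set (T := sum_upto ((n + 1) / 2 - k - 1) (fun j => 1 * 4 ^ j)).
      set (S0 := sum_upto k (fun j => 4 ^ j)) in *.
      replace (S0 + 4 ^ k * (1 + 4 ^ 1 * T))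
        with ((S0 + 4 ^ k) + 2 * 4 ^ k * (2 * T)) by (simpl; lia).
      rewrite mod_small_add by lia. lia.
Qed.

Lemma leb_iff x y x' y' : (x <=? y) = (x' <=? y') -> (x <= y <-> x' <= y').
Proof. intro H. rewrite <- !Nat.leb_le, H. reflexivity. Qed.

Theorem corollary1 (n : nat) (Hn : 2 <= n) (x x' : nat)
  (Hx : x < 2 ^ n) (Hx' : x' < 2 ^ n)
  (H1 : y1 n x = y1 n x') (H2 : y2 n x = y2 n x') :
  x mod 2 ^ (n - 1) = x' mod 2 ^ (n - 1).
Proof.
  set (A := constA n) in *. set (B := constB n) in *.
  assert (Z : forall z, z < 2 ^ n -> addm n 0 z = z)
    by (intros z Hz; unfold addm; apply Nat.mod_small; exact Hz).
  assert (CE : forall i, i < n ->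
     (2 ^ i <=? A mod 2 ^ i + x mod 2 ^ i) = (2 ^ i <=? A mod 2 ^ i + x' mod 2 ^ i) /\
     (2 ^ i <=? B mod 2 ^ i + x mod 2 ^ i) = (2 ^ i <=? B mod 2 ^ i + x' mod 2 ^ i)).
  { intros i Hi.
    assert (E1 : Nat.testbit (y1 n x) i = Nat.testbit (y1 n x') i) by (rewrite H1; reflexivity).
    assert (E2 : Nat.testbit (y2 n x) i = Nat.testbit (y2 n x') i) by (rewrite H2; reflexivity).
    unfold y1, y2, yq in E1, E2. fold A in E1, E2. fold B in E2.
    rewrite !Nat.lxor_spec in E1, E2. rewrite !Z in E1 by assumption.
    repeat rewrite (bit_addm _ _ _ _ Hi) in E1. repeat rewrite (bit_addm _ _ _ _ Hi) in E2.
    destruct (Nat.testbit A i), (Nat.testbit B i), (Nat.testbit x i), (Nat.testbit x' i),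
      (2 ^ i <=? A mod 2 ^ i + x mod 2 ^ i), (2 ^ i <=? A mod 2 ^ i + x' mod 2 ^ i),
      (2 ^ i <=? B mod 2 ^ i + x mod 2 ^ i), (2 ^ i <=? B mod 2 ^ i + x' mod 2 ^ i);
      simpl in *; split; congruence. }
  assert (IND : forall i, i <= n - 1 -> x mod 2 ^ i = x' mod 2 ^ i).
  { induction i as [|i IH]; intro Hi.
    - rewrite Nat.pow_0_r, !Nat.mod_1_r. reflexivity.
    - assert (HP : 2 ^ i <> 0) by (apply Nat.pow_nonzero; lia).
      assert (Hs : 2 ^ S i = 2 ^ i * 2) by (simpl; lia).
      destruct (CE (S i)) as [C D]; [lia|].
      destruct (key n (S i)) as [[K1 K2] | [K1 K2]]; [lia| |];
      change (constA n) with A in K1; change (constB n) with B in K2;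
      rewrite Hs in C, D, K1, K2 |- *;
      rewrite ?(Nat.Div0.mod_mul_r x), ?(Nat.Div0.mod_mul_r x') in C, D |- *;
      rewrite <- (IH ltac:(lia)) in C, D |- *;
      apply leb_iff in C; apply leb_iff in D;
      assert (e1 := Nat.mod_upper_bound (x / 2 ^ i) 2 ltac:(lia));
      assert (e2 := Nat.mod_upper_bound (x' / 2 ^ i) 2 ltac:(lia));
      assert (l := Nat.mod_upper_bound x (2 ^ i) HP);
      set (P := 2 ^ i) in *;
      set (a := A mod (P * 2)) in *; set (b := B mod (P * 2)) in *;
      set (e := (x / P) mod 2) in *; set (e' := (x' / P) mod 2) in *;
      set (L := x mod P) in *;
      assert (e = 0 \/ e = 1) as [-> | ->] by lia;
      assert (e' = 0 \/ e' = 1) as [-> | ->] by lia;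
      rewrite ?Nat.mul_0_r, ?Nat.mul_1_r in C, D |- *; try reflexivity; try lia. }
  apply IND. lia.
Qed.
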